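(* Let $n\ge 2$, let $\Psi:Y_n^>\to W^{(n)}$ be the $\mathbb{C}$-algebra isomorphism with $\Psi(e_{i,r})=x_{i,1}^r$ (see context), let $\mathbf{Y}_n^>$ be the $\mathbb{Z}[\frac12]$-subalgebra of $Y_n^>$ generated by $e_{i,r}^t/t!$ ($i\in I$, $r,t\in\mathbb{N}$), and let $\mathbf{W}^{(n)}\subset W^{(n)}$ be the integral form described in the context. Then $\Psi(\mathbf{Y}_n^>)\subset\mathbf{W}^{(n)}$.
   Context: $\mathbb{N}=\{0,1,\dots\}$, $I=\{1,\dots,n-1\}$, $(c_{ij})$ the Cartan matrix of $\mathfrak{sl}_n$. $Y_n^>$: the $\mathbb{C}$-algebra generated by $e_{i,r}$ ($i\in I,r\in\mathbb{N}$) with relations $[e_{i,r+1},e_{j,s}]-[e_{i,r},e_{j,s+1}]=\frac{c_{ij}}{2}(e_{i,r}e_{j,s}+e_{j,s}e_{i,r})$; $[e_{i,r},e_{j,s}]=0$ if $c_{ij}=0$; $[e_{i,r_1},[e_{i,r_2},e_{j,s}]]+[e_{i,r_2},[e_{i,r_1},e_{j,s}]]=0$ if $c_{ij}=-1$. Shuffle algebra: for $\underline{k}=(k_1,\dots,k_{n-1})\in\mathbb{N}^I$, $W^{(n)}_{\underline k}$ is the space of rational functions $F$ in variables $\{x_{i,r}\}_{i\in I,1\le r\le k_i}$, symmetric under $\Sigma_{k_1}\times\cdots\times\Sigma_{k_{n-1}}$ (each $\Sigma_{k_i}$ permuting $x_{i,1},\dots,x_{i,k_i}$), such that (pole condition)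 $F=f/\prod_{i=1}^{n-2}\prod_{r\le k_i,\,r'\le k_{i+1}}(x_{i,r}-x_{i+1,r'})$ with $f$ a $\Sigma_{\underline k}$-symmetric polynomial, and (wheel condition) $F=0$ whenever $x_{i,r_1}=x_{i+\epsilon,s}+\frac12=x_{i,r_2}+1$ for some $\epsilon\in\{\pm1\}$, $i$, $r_1\ne r_2$, $s$. $W^{(n)}=\bigoplus_{\underline k}W^{(n)}_{\underline k}$ with product: for $F\in W^{(n)}_{\underline k}$, $G\in W^{(n)}_{\underline\ell}$, $F\star G=\sum_{\sigma}\sigma\big(F(\{x_{i,r}\}_{r\le k_i})G(\{x_{i',r'}\}_{k_{i'}<r'\le k_{i'}+\ell_{i'}})\prod_{i,i'\in I}\prod_{r\le k_i<r'}\zeta_{i,i'}(x_{i,r}-x_{i',r'})\big)$, where $\zeta_{i,j}(z)=1+\frac{c_{ij}}{2z}$ and $\sigma=(\sigma_i)_{i\in I}$ runs over $(\underline k,\underline\ell)$-shuffles, i.e. $\sigma_i\in\Sigma_{k_i+\ell_i}$ with $\sigma_i(1)<\dots<\sigma_i(k_i)$ and $\sigma_i(k_i+1)<\dots<\sigma_i(k_i+\ell_i)$, acting by $x_{i,r}\mapsto x_{i,\sigma_i(r)}$. It is known (Tsymbaliuk) that $e_{i,r}\mapsto x_{i,1}^r\in W^{(n)}_{\mathbf 1_i}$ extends to a $\mathbb{C}$-algebra isomorphism $\Psi:Y_n^>\to W^{(n)}$. $\mathbf{W}^{(n)}_{\underline k}$ is the set of $F\in W^{(n)}_{\underline k}$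 whose numerator $f$ (in the pole condition) has coefficients in $\mathbb{Z}[\frac12]$; $\mathbf{W}^{(n)}=\bigoplus_{\underline k}\mathbf{W}^{(n)}_{\underline k}$. *)

(* Defs.v *)
From HB Require Import structures.
From mathcomp Require Import all_boot all_order all_algebra all_fingroup.
From mathcomp Require Import reals complex mpoly.
Set Implicit Arguments. Unset Strict Implicit. Unset Printing Implicit Defensive.
Import Order.TTheory GRing.Theory Num.Theory.
Local Open Scope ring_scope.

(* Conventions: I = {1,...,n-1} is represented by 'I_N with N = n-1 (shift by one).
   Variables x_{i,r} (r = 1..k_i) are represented by x i r with r = 0..k_i-1.
   A point (assignment of all variables) is a function 'I_N -> nat -> C.
   An element of W^(n) = (+)_k W_k is represented by its family of homogeneous
   components X k : (point -> C), read as rational functions: two elements are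
   identified (eqW) when every component agrees at all points whose relevant
   coordinates (x_{i,r}, r < k_i) are pairwise distinct ("generic points"),
   a Zariski-dense set on which all rational functions involved are defined. *)

Definition grading (N : nat) := {ffun 'I_N -> nat}.
Definition pt (C : Type) (N : nat) := 'I_N -> nat -> C.
Definition elt (C : Type) (N : nat) := grading N -> pt C N -> C.

Section Defs.
Variables (C : fieldType) (N : nat).

Definition cartan (i j : 'I_N) : int :=
  if i == j then (2 : int)
  else if ((i.+1 == j :> nat) || (j.+1 == i :> nat)) then (-1 : int) else (0 : int).

Definition zeta (i j : 'I_N) (w : C) : C := 1 + (cartan i j)%:~R / (2%:R * w).

Definition generic (k : grading N) (x : pt C N) : Prop :=
  forall (i j : 'I_N) (r s : nat), (r < k i)%N -> (s < k j)%N ->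
    x i r = x j s -> i = j /\ r = s.

Definition eqW (X Y : elt C N) : Prop :=
  forall (k : grading N) (x : pt C N), generic k x -> X k x = Y k x.

Definition addW (X Y : elt C N) : elt C N := fun k x => X k x + Y k x.
Definition scaleW (c : C) (X : elt C N) : elt C N := fun k x => c * X k x.
Definition oneW : elt C N := fun k x => if k == [ffun => 0%N] then 1 else 0.
Definition genW (i : 'I_N) (r : nat) : elt C N :=
  fun k x => if k == [ffun j => nat_of_bool (j == i)] then x i 0%N ^+ r else 0.

(* The shuffle product.  A (k,l)-shuffle sigma = (sigma_i) is encoded by the sets
   S_i = sigma_i({1..k_i}) of positions of the first k_i variables of colour i. *)
Definition shufW (X Y : elt C N) : elt C N := fun m x =>
  \sum_(S : {ffun 'I_N -> {set 'I_((\sum_(i < N) m i).+1)}} |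
          [forall i, S i \subset [set j | (val j < m i)%N]])
    (let k := [ffun i => #|S i|] in
     let l := [ffun i => (m i - #|S i|)%N] in
     let p1 := fun i => [seq val j | j <- enum (S i)] in
     let p2 := fun i => [seq j <- iota 0 (m i) | j \notin p1 i] in
     let y := fun i r => x i (nth 0%N (p1 i) r) in
     let z := fun i r => x i (nth 0%N (p2 i) r) in
     X k y * Y l z *
     \prod_(i < N) \prod_(j < N) \prod_(r < k i) \prod_(s < l j)
        zeta i j (y i r - z j s)).

Definition vars (k : grading N) : {set 'I_N * 'I_((\sum_(i < N) k i).+1)} :=
  [set p | (val p.2 < k p.1)%N].
Definition polyk (k : grading N) := mpoly #|vars k| C.
Definition evalk (k : grading N) (f : polyk k) (x : pt C N) : C :=
  f.@[fun j => x (enum_val j).1 (val (enum_val j).2)].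

Definition permpt (k : grading N) (sigma : forall i : 'I_N, {perm 'I_(k i)})
  (x : pt C N) : pt C N :=
  fun i r => match (insub r : option 'I_(k i)) with
             | Some r' => x i (val (sigma i r'))
             | None => x i r end.

Definition symk (k : grading N) (f : polyk k) : Prop :=
  forall (sigma : forall i : 'I_N, {perm 'I_(k i)}) (x : pt C N),
    evalk f (permpt sigma x) = evalk f x.

Definition Dk (k : grading N) (x : pt C N) : C :=
  \prod_(i < N) \prod_(j < N | j == i.+1 :> nat)
    \prod_(r < k i) \prod_(s < k j) (x i r - x j s).

Definition wheel (k : grading N) (X : elt C N) : Prop :=
  forall (i j : 'I_N) (r1 r2 s : nat),
    ((j.+1 == i :> nat) || (i.+1 == j :> nat)) ->
    (r1 < k i)%N -> (r2 < k i)%N -> (s < k j)%N -> r1 <> r2 ->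
    forall x : pt C N, generic k x ->
      x i r1 = x j s + 2%:R^-1 -> x j s + 2%:R^-1 = x i r2 + 1 ->
      X k x = 0.

Definition inW (X : elt C N) : Prop :=
  (exists s : seq (grading N), forall k, k \notin s ->
      forall x, generic k x -> X k x = 0) /\
  forall k : grading N,
    (exists f : polyk k, symk f /\
        forall x, generic k x -> X k x = evalk f x / Dk k x) /\
    wheel k X.

Definition dyadic (c : C) : Prop :=
  exists (a : int) (m : nat), c = a%:~R / 2%:R ^+ m.

Definition inbW (X : elt C N) : Prop :=
  inW X /\
  forall k : grading N, exists f : polyk k,
    (forall mm, dyadic f@_mm) /\
    forall x, generic k x -> X k x = evalk f x / Dk k x.

Section Yangian.
Variables (A : algType C) (e : 'I_N -> nat -> A).

Definition commA (a b : A) : A := a * b - b * a.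

Definition Yrel : Prop :=
  (forall i j r s,
     commA (e i r.+1) (e j s) - commA (e i r) (e j s.+1) =
     ((cartan i j)%:~R / 2%:R) *: (e i r * e j s + e j s * e i r)) /\
  (forall i j r s, cartan i j = 0 -> commA (e i r) (e j s) = 0) /\
  (forall i j r1 r2 s, cartan i j = (-1 : int) ->
     commA (e i r1) (commA (e i r2) (e j s)) +
     commA (e i r2) (commA (e i r1) (e j s)) = 0).

Inductive Ysub : A -> Prop :=
| Ysub_gen i r t : Ysub ((t`!%:R)^-1 *: (e i r ^+ t))
| Ysub_one : Ysub 1
| Ysub_add a b : Ysub a -> Ysub b -> Ysub (a + b)
| Ysub_mul a b : Ysub a -> Ysub b -> Ysub (a * b)
| Ysub_scale c a : dyadic c -> Ysub a -> Ysub (c *: a).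

Definition Psi_iso (Psi : A -> elt C N) : Prop :=
  (forall a b, eqW (Psi (a + b)) (addW (Psi a) (Psi b))) /\
  (forall (c : C) a, eqW (Psi (c *: a)) (scaleW c (Psi a))) /\
  (forall a b, eqW (Psi (a * b)) (shufW (Psi a) (Psi b))) /\
  eqW (Psi 1) oneW /\
  (forall i r, eqW (Psi (e i r)) (genW i r)) /\
  (forall a, inW (Psi a)) /\
  (forall a b, eqW (Psi a) (Psi b) -> a = b) /\
  (forall X, inW X -> exists a, eqW (Psi a) X).

End Yangian.
End Defs.

(* Main.v *)
Require Import Defs.
From HB Require Import structures.
From mathcomp Require Import all_boot all_order all_algebra all_fingroup.
From mathcomp Require Import reals complex mpoly.
From mathcomp Require Import ring.
From Stdlib Require Import Classical.
Set Implicit Arguments. Unset Strict Implicit. Unset Printing Implicit Defensive.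
Import Order.TTheory GRing.Theory Num.Theory.
Local Open Scope ring_scope.

Section Dyadic.
Variable C : numFieldType.
Implicit Types a b c : C.

Lemma two_neq0 : (2%:R : C) != 0. Proof. by rewrite pnatr_eq0. Qed.
Lemma two_pow_neq0 m : (2%:R : C) ^+ m != 0. Proof. by rewrite expf_neq0 // two_neq0. Qed.

Lemma dyadic_int (z : int) : dyadic (z%:~R : C).
Proof. by exists z, 0%N; rewrite expr0 divr1. Qed.

Lemma dyadic_nat (k : nat) : dyadic (k%:R : C).
Proof. by have := dyadic_int k%:Z; rewrite pmulrn. Qed.

Lemma dyadic0 : dyadic (0 : C). Proof. exact: (dyadic_nat 0). Qed.
Lemma dyadic1 : dyadic (1 : C). Proof. exact: (dyadic_nat 1). Qed.

Lemma dyadic_half : dyadic (2%:R^-1 : C).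
Proof. by exists 1%Z, 1%N; rewrite expr1 div1r. Qed.

Lemma dyadicD a b : dyadic a -> dyadic b -> dyadic (a + b).
Proof.
move=> [x [m ->]] [y [p ->]]; exists (x * 2 ^+ p + y * 2 ^+ m)%R, (m + p)%N.
have h2 := two_pow_neq0. rewrite rmorphD !rmorphM /= !rmorphXn /= exprD.
have -> : (2%:~R : C) = 2%:R by [].
field. by rewrite !two_pow_neq0.
Qed.

Lemma dyadicM a b : dyadic a -> dyadic b -> dyadic (a * b).
Proof.
move=> [x [m ->]] [y [p ->]]; exists (x * y)%R, (m + p)%N.
rewrite rmorphM /= exprD. field. by rewrite !two_pow_neq0.
Qed.

Lemma dyadicN a : dyadic a -> dyadic (- a).
Proof. move=> [x [m ->]]; exists (- x)%R, m; rewrite rmorphN /= mulNr. done. Qed.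

Lemma dyadicB a b : dyadic a -> dyadic b -> dyadic (a - b).
Proof. by move=> ha hb; apply: dyadicD => //; apply: dyadicN. Qed.

Lemma dyadic_sum I (r : seq I) (P : pred I) (F : I -> C) :
  (forall i, P i -> dyadic (F i)) -> dyadic (\sum_(i <- r | P i) F i).
Proof. by move=> h; apply: (big_ind (@dyadic C)) => //; [apply: dyadic0 | apply: dyadicD]. Qed.

Lemma dyadic_prod I (r : seq I) (P : pred I) (F : I -> C) :
  (forall i, P i -> dyadic (F i)) -> dyadic (\prod_(i <- r | P i) F i).
Proof. by move=> h; apply: (big_ind (@dyadic C)) => //; [apply: dyadic1 | apply: dyadicM]. Qed.

Lemma dyadicX a k : dyadic a -> dyadic (a ^+ k).
Proof. move=> h; elim: k => [|k ih]; [rewrite expr0; exact: dyadic1 | rewrite exprS; exact: dyadicM]. Qed.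

End Dyadic.

Section DyP.
Variables (C : numFieldType) (n : nat).
Implicit Types p q : {mpoly C[n]}.

Definition dyadicP p := forall m, dyadic p@_m.

Lemma dyadicP0 : dyadicP 0.
Proof. by move=> m; rewrite mcoeff0; apply: dyadic0. Qed.
Lemma dyadicPC c : dyadic c -> dyadicP c%:MP.
Proof. move=> h m; rewrite mcoeffC; apply: dyadicM => //; exact: dyadic_nat. Qed.
Lemma dyadicP1 : dyadicP 1.
Proof. exact: (dyadicPC (dyadic1 C)). Qed.
Lemma dyadicPXm m0 : dyadicP 'X_[m0].
Proof. by move=> m; rewrite mcoeffX; apply: dyadic_nat. Qed.
Lemma dyadicPD p q : dyadicP p -> dyadicP q -> dyadicP (p + q).
Proof. by move=> hp hq m; rewrite mcoeffD; apply: dyadicD. Qed.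
Lemma dyadicPN p : dyadicP p -> dyadicP (- p).
Proof. by move=> hp m; rewrite mcoeffN; apply: dyadicN. Qed.
Lemma dyadicPB p q : dyadicP p -> dyadicP q -> dyadicP (p - q).
Proof. by move=> hp hq; apply: dyadicPD => //; apply: dyadicPN. Qed.
Lemma dyadicPM p q : dyadicP p -> dyadicP q -> dyadicP (p * q).
Proof. by move=> hp hq m; rewrite mcoeffM; apply: dyadic_sum => i _; apply: dyadicM. Qed.
Lemma dyadicPZ c p : dyadic c -> dyadicP p -> dyadicP (c *: p).
Proof. by move=> hc hp m; rewrite mcoeffZ; apply: dyadicM. Qed.
Lemma dyadicP_prod I (r : seq I) (P : pred I) (F : I -> {mpoly C[n]}) :
  (forall i, P i -> dyadicP (F i)) -> dyadicP (\prod_(i <- r | P i) F i).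
Proof. by move=> h; apply: (big_ind dyadicP) => //; [apply: dyadicP1 | apply: dyadicPM]. Qed.
Lemma dyadicP_sum I (r : seq I) (P : pred I) (F : I -> {mpoly C[n]}) :
  (forall i, P i -> dyadicP (F i)) -> dyadicP (\sum_(i <- r | P i) F i).
Proof. by move=> h; apply: (big_ind dyadicP) => //; [apply: dyadicP0 | apply: dyadicPD]. Qed.

Lemma coefXM q (b : 'I_n) m :
  ('X_b * q)@_m = if (0 < m b)%N then q@_(m - U_(b))%MM else 0.
Proof.
case: ifP => hb.
  have le : (U_(b) <= m)%MM by rewrite lep1mP -lt0n.
  by rewrite -{1}(submK le) addmC mulrC mcoeffMX.
apply/eqP; rewrite mcoeff_eq0 mulrC; apply/negP.
have /perm_mem -> := msuppMX q U_(b); move=> /mapP [m' _ e].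
by move: hb; rewrite e mnmDE mnm1E eqxx.
Qed.

Lemma div_lin (a b : 'I_n) q : a != b -> dyadicP (('X_a - 'X_b) * q) -> dyadicP q.
Proof.
move=> ab hP.
have key m : q@_m = (('X_a - 'X_b) * q)@_(m + U_(a))%MM +
   (if (0 < m b)%N then q@_(m + U_(a) - U_(b))%MM else 0).
  rewrite mulrBl mcoeffB !coefXM !mnmDE !mnm1E eqxx addn1 /= addmK.
  have -> : (a == b) = false by apply/negbTE.
  by rewrite addn0; case: ifP => _; [rewrite subrK | rewrite subr0 addr0].
suff H d : forall m : 'X_{1..n}, (msize q - m a <= d)%N -> dyadic q@_m.
  by move=> m; apply: (H (msize q - m a)%N).
elim: d => [|d ih] m hm.
  suff -> : q@_m = 0 by apply: dyadic0.
  apply/eqP; rewrite mcoeff_eq0 msize_mdeg_ge //.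
  apply: (leq_trans (n:=m a)); first by rewrite -subn_eq0 -leqn0.
  by rewrite mdegE (bigD1 a) //= leq_addr.
rewrite key; apply: dyadicD => //; case: ifP => _; last exact: dyadic0.
apply: ih; rewrite mnmBE mnmDE !mnm1E eqxx.
have -> : (b == a) = false by apply/negbTE; rewrite eq_sym.
rewrite subn0.
by move: hm; rewrite addn1 subnS; case: (msize q - m a)%N.
Qed.

Definition divP (f : {mpoly C[n]}) := forall q, dyadicP (f * q) -> dyadicP q.

Lemma divP1 : divP 1. Proof. by move=> q; rewrite mul1r. Qed.
Lemma divPM f g : divP f -> divP g -> divP (f * g).
Proof. by move=> hf hg q; rewrite -mulrA => /hf /hg. Qed.
Lemma divP_prod I (r : seq I) (P : pred I) (F : I -> {mpoly C[n]}) :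
  (forall i, P i -> divP (F i)) -> divP (\prod_(i <- r | P i) F i).
Proof. by move=> h; apply: (big_ind divP) => //; [apply: divP1 | apply: divPM]. Qed.
Lemma divPX f e : divP f -> divP (f ^+ e).
Proof. move=> h; elim: e => [|e ih]; [rewrite expr0; exact: divP1 | rewrite exprS; exact: divPM]. Qed.
Lemma divP_lin (a b : 'I_n) : a != b -> divP ('X_a - 'X_b).
Proof. by move=> ab q; apply: div_lin. Qed.

End DyP.

Section Ident.
Variable C : numFieldType.

Lemma poly_eq0_allroots (G : {poly C}) (d : nat) :
  (size G <= d)%N -> (forall t, G.[t] = 0) -> G = 0.
Proof.
move=> hs ht; apply: (@roots_geq_poly_eq0 _ G [seq (k%:R : C) | k <- iota 0 d]).
- by apply/allP => x /mapP [k _ ->]; rewrite /root ht.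
- rewrite map_inj_uniq ?iota_uniq // => a b /eqP; rewrite eqr_nat => /eqP.
  done.
- by rewrite size_map size_iota.
Qed.

Definition mrest n (m : 'X_{1..n.+1}) : 'X_{1..n} := [multinom m (widen_ord (leqnSn n) i) | i < n].

Definition extv n (v : 'I_n -> C) (t : C) : 'I_n.+1 -> C :=
  fun i => match (insub (val i) : option 'I_n) with Some j => v j | None => t end.

Lemma extv_widen n v t (i : 'I_n) : extv v t (widen_ord (leqnSn n) i) = v i.
Proof.
rewrite /extv insubT //= => h; congr v; exact: val_inj.
Qed.

Lemma extv_max n v t : extv v t (@ord_max n) = t.
Proof. by rewrite /extv insubN //= ltnn. Qed.

Lemma meval_eq0 n (p : {mpoly C[n]}) : (forall v, p.@[v] = 0) -> p = 0.
Proof.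
elim: n p => [|n ih] p hp.
  apply/mpolyP => m; rewrite mcoeff0.
  have m0 : forall m' : 'X_{1..0}, m' = m by move=> m'; apply/mnmP => -[].
  have := hp (fun _ => 0); rewrite mevalE.
  under eq_bigr => m' _ do rewrite big_ord0 mulr1.
  case: (boolP (m \in msupp p)) => hm; last by move=> _; apply/eqP; rewrite mcoeff_eq0.
  rewrite (bigD1_seq m) ?msupp_uniq //= big1 ?addr0 // => m' hm'.
  by rewrite (m0 m') eqxx in hm'.
set msz := msize p.
pose Q (j : nat) : {mpoly C[n]} :=
  \sum_(m <- msupp p | m ord_max == j) p@_m *: 'X_[mrest m].
have hA : forall v t, p.@[extv v t] = \sum_(j < msz) (Q j).@[v] * t ^+ j.
  move=> v t; rewrite mevalE.
  transitivity (\sum_(m <- msupp p)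
     p@_m * ((\prod_(i < n) v i ^+ mrest m i) * t ^+ m ord_max)).
    apply: eq_bigr => m _; congr (_ * _); rewrite big_ord_recr /= extv_max.
    by congr (_ * _); apply: eq_bigr => i _; rewrite extv_widen mnmE.
  transitivity (\sum_(j < msz) \sum_(m <- msupp p) (if m ord_max == j then
     p@_m * ((\prod_(i < n) v i ^+ mrest m i) * t ^+ m ord_max) else 0)).
    rewrite exchange_big /=; apply: eq_big_seq => m hm.
    have hlt : (m ord_max < msz)%N.
      apply: leq_ltn_trans (msize_mdeg_lt hm).
      by rewrite mdegE (bigD1 ord_max) //= leq_addr.
    rewrite (bigD1 (Ordinal hlt)) //= eqxx [X in _ + X]big1 ?addr0 // => j hj.
    rewrite ifN //; apply: contra hj => /eqP e; apply/eqP/val_inj => /=.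
    by rewrite e.
  apply: eq_bigr => j _; rewrite /Q raddf_sum /= mulr_suml [RHS]big_mkcond /=.
  apply: eq_bigr => m _; case: eqP => // <-.
  by rewrite mevalZ mevalX mulrA.
have hQ : forall j, (j < msz)%N -> Q j = 0.
  move=> j hj; apply: ih => v.
  pose G := \poly_(i < msz) (Q i).@[v].
  have G0 : G = 0.
    apply: (@poly_eq0_allroots _ msz); first exact: size_poly.
    by move=> t; rewrite horner_poly -(hA v t) hp.
  have := congr1 (fun q : {poly C} => q`_j) G0; rewrite /G coef_poly hj coef0.
  done.
apply/mpolyP => m0; rewrite mcoeff0.
case: (boolP (m0 \in msupp p)) => hm; last by apply/eqP; rewrite mcoeff_eq0.
have hlt : (m0 ord_max < msz)%N.
  apply: leq_ltn_trans (msize_mdeg_lt hm).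
  by rewrite mdegE (bigD1 ord_max) //= leq_addr.
have := congr1 (mcoeff (mrest m0)) (hQ _ hlt); rewrite mcoeff0 /Q raddf_sum /=.
rewrite big_mkcond (bigD1_seq m0) ?msupp_uniq //= eqxx mcoeffZ mcoeffX eqxx mulr1.
rewrite [X in _ + X]big1 ?addr0 // => m hm'; case: eqP => // e1.
rewrite mcoeffZ mcoeffX; case: eqP; rewrite ?mulr0 // => e2.
exfalso; move: hm' => /eqP; apply; apply/mnmP => i.
case: (ltnP i n) => hi.
  have -> : i = widen_ord (leqnSn n) (Ordinal hi) by apply: val_inj.
  by have := congr1 (fun mm : 'X_{1..n} => mm (Ordinal hi)) e2; rewrite /mrest !mnmE.
have -> : i = ord_max by apply: val_inj; apply/eqP; rewrite eqn_leq hi -ltnS ltn_ord.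
by rewrite e1.
Qed.
End Ident.

Section Good.
Variables (C : numFieldType) (N : nat).
Implicit Types (m k : grading N) (x : pt C N).

Definition V m x (u : 'I_#|vars m|) : C := x (enum_val u).1 (val (enum_val u).2).
Arguments V m x u : clear implicits.


Lemma evalkE m (f : polyk C m) x : evalk f x = f.@[V m x].
Proof. by []. Qed.

Definition DP m (F : pt C N -> C) :=
  exists f : {mpoly C[#|vars m|]}, dyadicP f /\ forall x, F x = f.@[V m x].

Lemma DP_const m c : dyadic c -> DP m (fun _ => c).
Proof. by move=> h; exists c%:MP; split; [apply: dyadicPC | move=> x; rewrite mevalC]. Qed.

Lemma DP_add m F G : DP m F -> DP m G -> DP m (fun x => F x + G x).
Proof.
move=> [f [hf ef]] [g [hg eg]]; exists (f + g); split; first exact: dyadicPD.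
by move=> x; rewrite mevalD ef eg.
Qed.

Lemma DP_mul m F G : DP m F -> DP m G -> DP m (fun x => F x * G x).
Proof.
move=> [f [hf ef]] [g [hg eg]]; exists (f * g); split; first exact: dyadicPM.
by move=> x; rewrite mevalM ef eg.
Qed.

Lemma DP_opp m F : DP m F -> DP m (fun x => - F x).
Proof.
move=> [f [hf ef]]; exists (- f); split; first exact: dyadicPN.
by move=> x; rewrite mevalN ef.
Qed.

Lemma DP_sub m F G : DP m F -> DP m G -> DP m (fun x => F x - G x).
Proof. by move=> hF hG; apply: DP_add => //; apply: DP_opp. Qed.

Lemma DP_ext m F G : (forall x, F x = G x) -> DP m G -> DP m F.
Proof. by move=> e [f [hf ef]]; exists f; split => // x; rewrite e. Qed.

Lemma DP_sum m I (r : seq I) (P : pred I) (F : I -> pt C N -> C) :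
  (forall i, P i -> DP m (F i)) -> DP m (fun x => \sum_(i <- r | P i) F i x).
Proof.
move=> h; elim: r => [|a r ih].
  by apply: (DP_ext (G := fun _ => 0)) => [x|]; [rewrite big_nil | apply: DP_const; exact: dyadic0].
case: (boolP (P a)) => hPa.
  by apply: (DP_ext (G := fun x => F a x + \sum_(i <- r | P i) F i x)) => [x|];
    [rewrite big_cons hPa | apply: DP_add => //; apply: h].
by apply: (DP_ext _ ih) => x; rewrite big_cons (negbTE hPa).
Qed.

Lemma DP_prod m I (r : seq I) (P : pred I) (F : I -> pt C N -> C) :
  (forall i, P i -> DP m (F i)) -> DP m (fun x => \prod_(i <- r | P i) F i x).
Proof.
move=> h; elim: r => [|a r ih].
  by apply: (DP_ext (G := fun _ => 1)) => [x|]; [rewrite big_nil | apply: DP_const; exact: dyadic1].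
case: (boolP (P a)) => hPa.
  by apply: (DP_ext (G := fun x => F a x * \prod_(i <- r | P i) F i x)) => [x|];
    [rewrite big_cons hPa | apply: DP_mul => //; apply: h].
by apply: (DP_ext _ ih) => x; rewrite big_cons (negbTE hPa).
Qed.

Lemma DP_exp m F e : DP m F -> DP m (fun x => F x ^+ e).
Proof.
move=> h; elim: e => [|e ih].
  by apply: (DP_ext (G := fun _ => 1)) => [x|]; [rewrite expr0 | apply: DP_const; exact: dyadic1].
by apply: (DP_ext (G := fun x => F x * F x ^+ e)) => [x|]; [rewrite exprS | apply: DP_mul].
Qed.

Lemma DP_var m u : DP m (fun x => V m x u).
Proof.
exists 'X_u; split; first exact: dyadicPXm.
by move=> x; rewrite mevalXU.
Qed.

Lemma sum_ge m (i : 'I_N) : (m i <= \sum_(j < N) m j)%N.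
Proof. by rewrite (bigD1 i) //= leq_addr. Qed.

Lemma in_vars m (i : 'I_N) r (hr : (r < m i)%N) :
  (i, Ordinal (leq_trans hr (leq_trans (sum_ge m i) (leqnSn _)))) \in vars m.
Proof. by rewrite /vars inE /=. Qed.

Definition rk m (i : 'I_N) r (hr : (r < m i)%N) : 'I_#|vars m| :=
  enum_rank_in (in_vars hr) (i, Ordinal (leq_trans hr (leq_trans (sum_ge m i) (leqnSn _)))).

Lemma rkE m (i : 'I_N) r (hr : (r < m i)%N) :
  enum_val (rk hr) = (i, Ordinal (leq_trans hr (leq_trans (sum_ge m i) (leqnSn _)))).
Proof. by rewrite /rk enum_rankK_in // in_vars. Qed.

Lemma V_rk m (i : 'I_N) r (hr : (r < m i)%N) x : V m x (rk hr) = x i r.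
Proof. by rewrite /V rkE. Qed.

Lemma DP_atom m (i : 'I_N) r : (r < m i)%N -> DP m (fun x => x i r).
Proof. by move=> hr; apply: (DP_ext (G := fun x => V m x (rk hr))) => [x|]; [rewrite V_rk | apply: DP_var]. Qed.

Lemma enum_val_lt m (u : 'I_#|vars m|) : (val (enum_val u).2 < m (enum_val u).1)%N.
Proof. by have := enum_valP u; rewrite /vars inE. Qed.

Lemma DP_eval m k (f : {mpoly C[#|vars k|]}) (phi : 'I_N -> nat -> nat) :
  dyadicP f -> (forall i r, (r < k i)%N -> (phi i r < m i)%N) ->
  DP m (fun x => f.@[V k (fun i r => x i (phi i r))]).
Proof.
move=> hf hphi.
apply: (DP_ext (G := fun x => \sum_(mu <- msupp f) f@_mu *
   \prod_(u < #|vars k|) (V k (fun i r => x i (phi i r)) u) ^+ mu u)) => [x|].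
  by rewrite mevalE.
apply: DP_sum => mu _; apply: DP_mul; first by apply: DP_const.
apply: DP_prod => u _; apply: DP_exp; rewrite /V.
apply: DP_atom; apply: hphi; exact: enum_val_lt.
Qed.

End Good.
Arguments V {C N} m x u.

Section Good2.
Variables (C : numFieldType) (N : nat).
Implicit Types (m k : grading N) (x : pt C N).

Definition Om m x : C :=
  \prod_(u : 'I_#|vars m|) \prod_(w | w != u) (V m x u - V m x w).
Definition Ompoly m : {mpoly C[#|vars m|]} :=
  \prod_(u : 'I_#|vars m|) \prod_(w | w != u) ('X_u - 'X_w).

Lemma Ompoly_eval m x : (Ompoly m).@[V m x] = Om m x.
Proof.
rewrite /Ompoly rmorph_prod /=; apply: eq_bigr => u _.
by rewrite rmorph_prod /=; apply: eq_bigr => w _; rewrite mevalB !mevalXU.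
Qed.

Lemma Ompoly_dy m : dyadicP (Ompoly m).
Proof.
apply: dyadicP_prod => u _; apply: dyadicP_prod => w _.
by apply: dyadicPB; apply: dyadicPXm.
Qed.

Lemma DP_Om m : DP m (Om m).
Proof. by exists (Ompoly m); split; [apply: Ompoly_dy | move=> x; rewrite Ompoly_eval]. Qed.

Lemma Ompoly_div m : divP (Ompoly m).
Proof.
apply: divP_prod => u _; apply: divP_prod => w hw; apply: divP_lin.
by rewrite eq_sym.
Qed.

Lemma X_sub_neq0 n (u w : 'I_n) : w != u -> ('X_u - 'X_w : {mpoly C[n]}) != 0.
Proof.
move=> hw; apply/eqP => /(congr1 (mcoeff U_(u))).
rewrite mcoeffB !mcoeffXU eqxx mcoeff0 (negbTE hw) subr0 => /eqP.
by rewrite oner_eq0.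
Qed.

Lemma Ompoly_neq0 m : Ompoly m != 0.
Proof.
rewrite /Ompoly; apply/prodf_neq0 => u _; apply/prodf_neq0 => w hw.
exact: X_sub_neq0.
Qed.

Lemma V_inj m x (u w : 'I_#|vars m|) : generic m x -> V m x u = V m x w -> u = w.
Proof.
move=> hg e; have := hg _ _ _ _ (enum_val_lt u) (enum_val_lt w) e.
case=> e1 e2; apply: enum_val_inj.
case: (enum_val u) e1 e2 => a b; case: (enum_val w) => c d /= -> e2.
by congr pair; apply: val_inj.
Qed.

Lemma Om_neq0 m x : generic m x -> Om m x != 0.
Proof.
move=> hg; apply/prodf_neq0 => u _; apply/prodf_neq0 => w hw.
by rewrite subr_eq0; apply/eqP => /(V_inj hg) e; rewrite e eqxx in hw.
Qed.

Lemma Om_generic m x : Om m x != 0 -> generic m x.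
Proof.
move=> hO i j r s hr hs e.
case: (boolP ((i == j) && (r == s)%N)) => [/andP [/eqP -> /eqP ->] //|hne].
exfalso; move/negP: hO; apply; rewrite /Om; apply/prodf_eq0.
exists (rk hr) => //; apply/prodf_eq0; exists (rk hs).
  apply/negP => /eqP /(congr1 (@enum_val _ (mem (vars m)))); rewrite !rkE.
  by case=> e1 e2; move: hne; rewrite e1 e2 !eqxx.
by rewrite !V_rk e subrr.
Qed.

Definition ptof m (v : 'I_#|vars m| -> C) : pt C N := fun i r =>
  if [pick u | ((enum_val u).1 == i) && (val (enum_val u).2 == r)] is Some u
  then v u else 0.

Lemma V_ptof m v : V m (ptof v) =1 v.
Proof.
move=> u; rewrite /V /ptof; case: pickP => [u' /andP [/eqP e1 /eqP e2]|].
  congr v; apply: enum_val_inj; case: (enum_val u') e1 e2 => a b /= -> e2.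
  by case: (enum_val u) e2 => c d /= e2; congr pair; apply: val_inj.
by move=> /(_ u); rewrite !eqxx.
Qed.

Lemma ident_generic m (q1 q2 : {mpoly C[#|vars m|]}) :
  (forall x, generic m x -> q1.@[V m x] = q2.@[V m x]) -> q1 = q2.
Proof.
move=> h; apply/eqP; rewrite -subr_eq0; apply/eqP.
have : (q1 - q2) * Ompoly m = 0.
  apply: meval_eq0 => v; rewrite -(meval_eq _ (V_ptof v)) mevalM Ompoly_eval.
  case: (classic (generic m (ptof v))) => hg.
    by rewrite mevalB h // subrr mul0r.
  have : ~~ (Om m (ptof v) != 0) by apply/negP => /Om_generic.
  by rewrite negbK => /eqP ->; rewrite mulr0.
by move/eqP; rewrite mulf_eq0 (negbTE (Ompoly_neq0 m)) orbF => /eqP.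
Qed.

Definition Good m (F : pt C N -> C) :=
  exists e P, DP m P /\ forall x, generic m x -> F x * Om m x ^+ e = P x.

Lemma Good_DP m F : DP m F -> Good m F.
Proof. by move=> h; exists 0%N, F; split => // x _; rewrite expr0 mulr1. Qed.

Lemma Good_ext m F G : (forall x, generic m x -> F x = G x) -> Good m G -> Good m F.
Proof. by move=> e [n [P [hP eP]]]; exists n, P; split => // x hx; rewrite e // eP. Qed.

Lemma Good_add m F G : Good m F -> Good m G -> Good m (fun x => F x + G x).
Proof.
move=> [e1 [P1 [h1 E1]]] [e2 [P2 [h2 E2]]].
exists (e1 + e2)%N, (fun x => P1 x * Om m x ^+ e2 + P2 x * Om m x ^+ e1); split.
  by apply: DP_add; apply: DP_mul => //; apply: DP_exp; apply: DP_Om.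
move=> x hx; rewrite -E1 // -E2 // exprD; ring.
Qed.

Lemma Good_mul m F G : Good m F -> Good m G -> Good m (fun x => F x * G x).
Proof.
move=> [e1 [P1 [h1 E1]]] [e2 [P2 [h2 E2]]].
exists (e1 + e2)%N, (fun x => P1 x * P2 x); split; first by apply: DP_mul.
move=> x hx; rewrite -E1 // -E2 // exprD; ring.
Qed.

Lemma Good_const m c : dyadic c -> Good m (fun _ => c).
Proof. by move=> h; apply: Good_DP; apply: DP_const. Qed.

Lemma Good_sum m I (r : seq I) (P : pred I) (F : I -> pt C N -> C) :
  (forall i, P i -> Good m (F i)) -> Good m (fun x => \sum_(i <- r | P i) F i x).
Proof.
move=> h; elim: r => [|a r ih].
  by apply: (Good_ext (G := fun _ => 0)) => [x|]; [rewrite big_nil | apply: Good_const; exact: dyadic0].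
case: (boolP (P a)) => hPa.
  by apply: (Good_ext (G := fun x => F a x + \sum_(i <- r | P i) F i x)) => [x|];
    [rewrite big_cons hPa | apply: Good_add => //; apply: h].
by apply: (Good_ext _ ih) => x; rewrite big_cons (negbTE hPa).
Qed.

Lemma Good_prod m I (r : seq I) (P : pred I) (F : I -> pt C N -> C) :
  (forall i, P i -> Good m (F i)) -> Good m (fun x => \prod_(i <- r | P i) F i x).
Proof.
move=> h; elim: r => [|a r ih].
  by apply: (Good_ext (G := fun _ => 1)) => [x|]; [rewrite big_nil | apply: Good_const; exact: dyadic1].
case: (boolP (P a)) => hPa.
  by apply: (Good_ext (G := fun x => F a x * \prod_(i <- r | P i) F i x)) => [x|];
    [rewrite big_cons hPa | apply: Good_mul => //; apply: h].
by apply: (Good_ext _ ih) => x; rewrite big_cons (negbTE hPa).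
Qed.

Lemma Good_inv_diff m (i j : 'I_N) a b (ha : (a < m i)%N) (hb : (b < m j)%N) :
  ~~ ((i == j) && (a == b)%N) -> Good m (fun x => (x i a - x j b)^-1).
Proof.
move=> hne; set u := rk ha; set w := rk hb.
have uw : w != u.
  apply/negP => /eqP /(congr1 (@enum_val _ (mem (vars m)))); rewrite !rkE.
  by case=> e1 e2; move: hne; rewrite e1 e2 !eqxx.
exists 1%N, (fun x => (\prod_(w' | (w' != u) && (w' != w)) (V m x u - V m x w')) *
   \prod_(u' | u' != u) \prod_(w' | w' != u') (V m x u' - V m x w')); split.
  apply: DP_mul; apply: DP_prod => ? _; try apply: DP_prod => ? _; apply: DP_sub; apply: DP_var.
move=> x hx; rewrite expr1 /Om (bigD1 u) //= (bigD1 w) //= -/u -/w !V_rk.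
have nz : x i a - x j b != 0.
  rewrite subr_eq0; apply/eqP => e; have [e1 e2] := hx _ _ _ _ ha hb e.
  by move: hne; rewrite e1 e2 !eqxx.
by rewrite !mulrA mulVf // mul1r.
Qed.

End Good2.
Arguments Ompoly {C N} m.

Section Shuf.
Variables (C : numFieldType) (N : nat).
Implicit Types (m k : grading N) (x : pt C N) (X Y : elt C N).

Lemma Dk_neq0 k x : generic k x -> Dk k x != 0.
Proof.
move=> hg; rewrite /Dk; apply/prodf_neq0 => i _; apply/prodf_neq0 => j /eqP hj.
apply/prodf_neq0 => r _; apply/prodf_neq0 => s _; rewrite subr_eq0; apply/eqP => e.
have [e1 _] := hg _ _ _ _ (ltn_ord r) (ltn_ord s) e.
by move: hj; rewrite e1 => /eqP; rewrite eqn_leq ltnn andbF.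
Qed.

Lemma DP_Dk k : DP k (@Dk C N k).
Proof.
apply: DP_prod => i _; apply: DP_prod => j _; apply: DP_prod => r _; apply: DP_prod => s _.
by apply: DP_sub; apply: DP_atom.
Qed.

Definition dyW X := forall k, exists f : {mpoly C[#|vars k|]}, dyadicP f /\
  forall x, generic k x -> X k x = f.@[V k x] / Dk k x.

Lemma dyW_eqW X Y : eqW X Y -> dyW Y -> dyW X.
Proof. by move=> e h k; have [f [hf ef]] := h k; exists f; split => // x hx; rewrite e // ef. Qed.

Lemma dyW_of_DP X : (forall k, exists P, DP k P /\ forall x, generic k x -> X k x * Dk k x = P x) ->
  dyW X.
Proof.
move=> h k; have [P [[f [hf ef]] eP]] := h k; exists f; split => // x hx.
by rewrite -ef -eP // mulfK // Dk_neq0.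
Qed.

Lemma dyW_of_Good X : inW X -> (forall m, Good m (X m)) -> dyW X.
Proof.
move=> [_ hW] hG k; have [[h [_ eh]] _] := hW k.
have [e [P [hP eP]]] := hG k.
have [Pp [hPp ePp]] : DP k (fun x => P x * Dk k x) by apply: DP_mul => //; apply: DP_Dk.
have E : h * Ompoly k ^+ e = Pp.
  apply: ident_generic => x hx; rewrite mevalM rmorphXn /= Ompoly_eval -ePp -eP //.
  by rewrite (eh x hx) /evalk -/(V k x) mulrAC divfK // Dk_neq0.
exists h; split; last first.
  by move=> x hx; rewrite (eh x hx).
apply: (divPX (e:=e) (@Ompoly_div C N k)); rewrite mulrC E; exact: hPp.
Qed.

Section ShufData.
Variable m : grading N.
Variable S : {ffun 'I_N -> {set 'I_((\sum_(i < N) m i).+1)}}.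
Hypothesis hS : [forall i, S i \subset [set j | (val j < m i)%N]].

Definition p1 i := [seq val j | j <- enum (S i)].
Definition p2 i := [seq j <- iota 0 (m i) | j \notin p1 i].
Definition kS : grading N := [ffun i => #|S i|].
Definition lS : grading N := [ffun i => (m i - #|S i|)%N].

Lemma p1_size i : size (p1 i) = kS i.
Proof. by rewrite size_map ffunE cardE. Qed.
Lemma p1_uniq i : uniq (p1 i).
Proof. by rewrite map_inj_uniq ?enum_uniq //; apply: val_inj. Qed.
Lemma p1_lt i a : a \in p1 i -> (a < m i)%N.
Proof.
move=> /mapP [j]; rewrite mem_enum => hj ->.
by have := forallP hS i => /subsetP /(_ _ hj); rewrite inE.
Qed.
Lemma p2_uniq i : uniq (p2 i).
Proof. by rewrite filter_uniq // iota_uniq. Qed.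
Lemma p2_mem i a : (a \in p2 i) = (a < m i)%N && (a \notin p1 i).
Proof. by rewrite mem_filter mem_iota add0n andbC. Qed.
Lemma p2_size i : size (p2 i) = lS i.
Proof.
rewrite ffunE size_filter.
have h := count_predC (mem (p1 i)) (iota 0 (m i)); rewrite size_iota in h.
have hs : size (p1 i) = #|S i| by rewrite p1_size ffunE.
rewrite -[in RHS]h -hs.
suff -> : count (mem (p1 i)) (iota 0 (m i)) = size (p1 i) by rewrite addKn.
rewrite -size_filter; apply: perm_size; apply: uniq_perm.
- by rewrite filter_uniq // iota_uniq.
- exact: p1_uniq.
move=> a; rewrite mem_filter mem_iota add0n /=; apply/andP/idP => [[]//|ha].
by split => //; apply: p1_lt.
Qed.

Definition phi1 i r := nth 0%N (p1 i) r.
Definition phi2 i r := nth 0%N (p2 i) r.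

Lemma phi1_mem i r : (r < kS i)%N -> phi1 i r \in p1 i.
Proof. by move=> h; apply: mem_nth; rewrite p1_size. Qed.
Lemma phi2_mem i r : (r < lS i)%N -> phi2 i r \in p2 i.
Proof. by move=> h; apply: mem_nth; rewrite p2_size. Qed.
Lemma phi1_lt i r : (r < kS i)%N -> (phi1 i r < m i)%N.
Proof. by move=> /phi1_mem /p1_lt. Qed.
Lemma phi2_lt i r : (r < lS i)%N -> (phi2 i r < m i)%N.
Proof. by move=> /phi2_mem; rewrite p2_mem => /andP []. Qed.
Lemma phi1_inj i r s : (r < kS i)%N -> (s < kS i)%N -> phi1 i r = phi1 i s -> r = s.
Proof.
move=> hr hs e; apply/eqP; rewrite -(nth_uniq 0%N _ _ (p1_uniq i)) ?p1_size //.
by apply/eqP.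
Qed.
Lemma phi2_inj i r s : (r < lS i)%N -> (s < lS i)%N -> phi2 i r = phi2 i s -> r = s.
Proof.
move=> hr hs e; apply/eqP; rewrite -(nth_uniq 0%N _ _ (p2_uniq i)) ?p2_size //.
by apply/eqP.
Qed.
Lemma phi12_neq i r s : (r < kS i)%N -> (s < lS i)%N -> phi1 i r != phi2 i s.
Proof.
move=> hr hs; apply/eqP => e; have := phi2_mem hs; rewrite p2_mem -e.
by rewrite phi1_mem // andbF.
Qed.

Lemma gen1 x : generic m x -> generic kS (fun i r => x i (phi1 i r)).
Proof.
move=> hg i j r s hr hs e; have [e1 e2] := hg _ _ _ _ (phi1_lt hr) (phi1_lt hs) e.
subst j; split => //; exact: phi1_inj e2.
Qed.
Lemma gen2 x : generic m x -> generic lS (fun i r => x i (phi2 i r)).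
Proof.
move=> hg i j r s hr hs e; have [e1 e2] := hg _ _ _ _ (phi2_lt hr) (phi2_lt hs) e.
subst j; split => //; exact: phi2_inj e2.
Qed.

End ShufData.

End Shuf.

Section ShufGood.
Variables (C : numFieldType) (N : nat).
Implicit Types (m k : grading N) (x : pt C N) (X Y : elt C N).

Lemma Good_prod_inv m I (r : seq I) (P : pred I) (F : I -> pt C N -> C) :
  (forall i, P i -> Good m (fun x => (F i x)^-1)) ->
  Good m (fun x => (\prod_(i <- r | P i) F i x)^-1).
Proof.
move=> h; apply: (Good_ext (G := fun x => \prod_(i <- r | P i) (F i x)^-1)).
  by move=> x _; rewrite prodfV.
exact: Good_prod.
Qed.

Lemma Good_shuf X Y : dyW X -> dyW Y -> forall m, Good m (shufW X Y m).
Proof.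
move=> hX hY m; rewrite /shufW; apply: Good_sum => S hS.
have [f [hf ef]] := hX (kS S); have [g [hg eg]] := hY (lS S).
set y := fun x (i : 'I_N) r => x i (phi1 S i r).
set z := fun x (i : 'I_N) r => x i (phi2 S i r).
apply: (Good_ext (G := fun x =>
   (f.@[V (kS S) (y x)] * (Dk (kS S) (y x))^-1) *
   (g.@[V (lS S) (z x)] * (Dk (lS S) (z x))^-1) *
   \prod_(i < N) \prod_(j < N) \prod_(r < kS S i) \prod_(s < lS S j)
        zeta i j (y x i r - z x j s))).
  move=> x hx /=; rewrite -/(kS S) -/(lS S).
  rewrite (ef _ (gen1 hS hx)) (eg _ (gen2 hS hx)).
  done.
apply: Good_mul; first apply: Good_mul.
- apply: Good_mul; first by apply: Good_DP; apply: DP_eval => // i r; apply: phi1_lt.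
  apply: Good_prod_inv => i _; apply: Good_prod_inv => j /eqP hj.
  apply: Good_prod_inv => r _; apply: Good_prod_inv => s _.
  apply: (Good_inv_diff C (phi1_lt hS (ltn_ord r)) (phi1_lt hS (ltn_ord s))).
  by apply/negP => /andP [/eqP e _]; move: hj; rewrite e => /eqP; rewrite eqn_leq ltnn andbF.
- apply: Good_mul; first by apply: Good_DP; apply: DP_eval => // i r; apply: phi2_lt.
  apply: Good_prod_inv => i _; apply: Good_prod_inv => j /eqP hj.
  apply: Good_prod_inv => r _; apply: Good_prod_inv => s _.
  apply: (Good_inv_diff C (phi2_lt hS (ltn_ord r)) (phi2_lt hS (ltn_ord s))).
  by apply/negP => /andP [/eqP e _]; move: hj; rewrite e => /eqP; rewrite eqn_leq ltnn andbF.
apply: Good_prod => i _; apply: Good_prod => j _; apply: Good_prod => r _; apply: Good_prod => s _.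
apply: (Good_ext (G := fun x => 1 + ((cartan i j)%:~R / 2%:R) * (y x i r - z x j s)^-1)).
  by move=> x _; rewrite /zeta invfM mulrA.
apply: Good_add; first by apply: Good_const; apply: dyadic1.
apply: Good_mul; first by apply: Good_const; apply: dyadicM; [apply: dyadic_int | apply: dyadic_half].
apply: (Good_inv_diff C (phi1_lt hS (ltn_ord r)) (phi2_lt hS (ltn_ord s))).
apply/negP => /andP [/eqP e]; move: s; rewrite -e => s.
by rewrite (negbTE (phi12_neq hS (ltn_ord r) (ltn_ord s))).
Qed.

End ShufGood.

Lemma size_index_enum_ord n : size (index_enum 'I_n) = n.
Proof. by rewrite [index_enum _]unlock -enumT size_enum_ord. Qed.

Section Lagrange.
Variable F : fieldType.

Lemma lagrange_sum (t : nat) (x : 'I_t.+1 -> F) : injective x ->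
  \sum_(c < t.+1) \prod_(b < t.+1 | b != c) (1 + (x b - x c)^-1) = t.+1%:R.
Proof.
move=> xinj.
pose Q := \prod_(a < t.+1) ('X - (x a)%:P).
pose q := \prod_(a < t.+1) ('X - (x a + 1)%:P).
pose p := q - Q.
pose d c := \prod_(b < t.+1 | b != c) (x c - x b).
pose B c := \prod_(b < t.+1 | b != c) ('X - (x b)%:P).
pose L := \sum_(c < t.+1) (p.[x c] / d c) *: B c.
have dn0 c : d c != 0.
  apply/prodf_neq0 => b hb; rewrite subr_eq0; apply/eqP => /xinj e.
  by rewrite e eqxx in hb.
have sizeQ (G : 'I_t.+1 -> F) : size (\prod_(a < t.+1) ('X - (G a)%:P)) = t.+2.
  by rewrite size_prod_XsubC size_index_enum_ord.
have monQ (G : 'I_t.+1 -> F) : \prod_(a < t.+1) ('X - (G a)%:P) \is monic.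
  exact: monic_prod_XsubC.
have sizeB c : size (B c) = t.+1.
  have := sizeQ x; rewrite (bigD1 c) //= mulrC size_Mmonic ?monicXsubC ?size_XsubC //.
    by rewrite addn2 => -[].
  by apply: monic_neq0; apply: monic_prod_XsubC.
have monB c : B c \is monic by apply: monic_prod_XsubC.
have sizep : (size p <= t.+1)%N.
  apply/leq_sizeP => j hj; rewrite coefB.
  case: (ltngtP j t.+1) => [hj'|hj'|->].
  - by move: hj; rewrite leqNgt hj'.
  - rewrite nth_default; last by rewrite sizeQ.
    by rewrite nth_default ?subrr // sizeQ.
  have := monQ x; have := monQ (fun a => x a + 1); move=> /monicP h1 /monicP h2.
  by move: h1 h2; rewrite /lead_coef !sizeQ /= => -> ->; rewrite subrr.
have sizeL : (size L <= t.+1)%N.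
  apply/leq_sizeP => j hj; rewrite /L coef_sum big1 // => c _.
  by rewrite coefZ nth_default ?mulr0 // sizeB.
have pL : p = L.
  apply/eqP; rewrite -subr_eq0; apply/eqP.
  apply: (@roots_geq_poly_eq0 _ _ [seq x a | a <- enum 'I_t.+1]).
  - apply/allP => y /mapP [a _ ->]; rewrite /root hornerD hornerN /L horner_sum.
    suff -> : \sum_(c < t.+1) ((p.[x c] / d c) *: B c).[x a] = p.[x a] by rewrite subrr.
    rewrite (bigD1 a) //= big1 ?addr0.
      rewrite hornerZ /B horner_prod.
      under eq_bigr => b _ do rewrite hornerXsubC.
      by rewrite -/(d a) divfK.
    move=> c hc; rewrite hornerZ /B horner_prod (bigD1 a) 1?eq_sym //= hornerXsubC subrr.
    by rewrite mul0r mulr0.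
  - by rewrite map_inj_uniq ?enum_uniq.
  - rewrite size_map size_enum_ord.
    by apply: leq_trans (size_add _ _) _; rewrite size_opp geq_max sizep sizeL.
have coefp : p`_t = - t.+1%:R.
  rewrite coefB.
  have cf (G : 'I_t.+1 -> F) : (\prod_(a < t.+1) ('X - (G a)%:P))`_t = - \sum_(a < t.+1) G a.
    have := @coefPn_prod_XsubC F [seq G a | a <- index_enum 'I_t.+1].
    rewrite size_map size_index_enum_ord /= !big_map => h.
    by rewrite h.
  rewrite !cf big_split /= sumr_const card_ord; ring.
have coefL : L`_t = \sum_(c < t.+1) p.[x c] / d c.
  rewrite /L coef_sum; apply: eq_bigr => c _; rewrite coefZ.
  by have /monicP := monB c; rewrite /lead_coef sizeB /= => ->; rewrite mulr1.
have pxc c : p.[x c] = - \prod_(b < t.+1 | b != c) (x c - x b - 1).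
  rewrite /p hornerD hornerN.
  have -> : Q.[x c] = 0.
    by rewrite /Q horner_prod (bigD1 c) //= hornerXsubC subrr mul0r.
  rewrite subr0 /q horner_prod (bigD1 c) //= hornerXsubC.
  have -> : x c - (x c + 1) = -1 by ring.
  rewrite mulN1r; congr (- _); apply: eq_bigr => b _; rewrite hornerXsubC; ring.
have := congr1 (fun P : {poly F} => P`_t) pL; rewrite /= coefp coefL => e.
apply: (@oppr_inj _); rewrite e -sumrN; apply: eq_bigr => c _.
rewrite pxc /d mulNr -prodf_div; congr (- _); apply: eq_bigr => b hb.
have nz : x b - x c != 0 by rewrite subr_eq0; apply/eqP => /xinj e'; rewrite e' eqxx in hb.
have nz' : x c - x b != 0 by rewrite subr_eq0 eq_sym -subr_eq0.
by field; rewrite nz nz'.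
Qed.

End Lagrange.

Lemma val_enum_set n (P : pred nat) :
  [seq val a | a <- enum [set a : 'I_n | P (val a)]] = [seq b <- iota 0 n | P b].
Proof.
rewrite /enum_mem -enumT -val_enum_ord filter_map; congr map.
by apply: eq_filter => a; rewrite !inE.
Qed.

Section GenData.
Variables (N : nat) (i0 : 'I_N) (m : grading N) (t : nat).
Hypotheses (mi0 : m i0 = t.+1) (mj : forall j, j != i0 -> m j = 0%N).

Definition delta s : grading N := [ffun j => (s * (j == i0))%N].

Local Notation M := (\sum_(i < N) m i)%N.

Lemma tM : (t.+1 <= M)%N.
Proof. by rewrite -mi0 sum_ge. Qed.

Definition Sc (c : 'I_t.+1) : {ffun 'I_N -> {set 'I_M.+1}} :=
  [ffun j => if j == i0 then [set a : 'I_M.+1 | (val a < t.+1)%N && (val a != c)] else set0].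

Lemma p1Sc c : p1 (Sc c) i0 = [seq b <- iota 0 t.+1 | b != val c].
Proof.
rewrite /p1 ffunE eqxx (val_enum_set _ (fun b => (b < t.+1)%N && (b != val c))).
have -> : M.+1 = (t.+1 + (M - t))%N by rewrite addSn subnKC // ltnW // tM.
rewrite iotaD filter_cat add0n.
have -> : [seq b <- iota t.+1 (M - t) | (b < t.+1)%N && (b != val c)] = [::].
  apply/eqP; rewrite -[_ == _]negbK -has_filter; apply/hasPn => b.
  by rewrite mem_iota => /andP [hb _]; rewrite ltnNge hb.
rewrite cats0; apply: eq_in_filter => b; rewrite mem_iota add0n /= => ->.
done.
Qed.

Lemma p1Sc_j c j : j != i0 -> p1 (Sc c) j = [::].
Proof. by move=> hj; rewrite /p1 ffunE (negbTE hj) enum_set0. Qed.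

Lemma size_Lc (c : 'I_t.+1) : size [seq b <- iota 0 t.+1 | b != val c] = t.
Proof.
rewrite size_filter.
have h := count_predC (pred1 (val c)) (iota 0 t.+1).
rewrite size_iota (count_uniq_mem _ (iota_uniq 0 t.+1)) mem_iota add0n ltn_ord /= in h.
by move: h; rewrite add1n => -[].
Qed.

Lemma cardSc c : #|Sc c i0| = t.
Proof. by rewrite cardE -(size_map val) -/(p1 (Sc c) i0) p1Sc size_Lc. Qed.

Lemma cardSc_j c j : j != i0 -> #|Sc c j| = 0%N.
Proof. by move=> hj; rewrite ffunE (negbTE hj) cards0. Qed.

Lemma Sc_cond c : [forall j, Sc c j \subset [set a | (val a < m j)%N]].
Proof.
apply/forallP => j; rewrite ffunE; case: (eqVneq j i0) => [->|_]; last exact: sub0set.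
by apply/subsetP => a; rewrite !inE mi0 => /andP [].
Qed.

Lemma kSc c : kS (Sc c) = delta t.
Proof.
apply/ffunP => j; rewrite [kS _ j]ffunE [delta t j]ffunE; case: (eqVneq j i0) => [->|hj].
  by rewrite cardSc muln1.
by rewrite cardSc_j // muln0.
Qed.

Lemma lSc c : lS (Sc c) = delta 1.
Proof.
apply/ffunP => j; rewrite [lS _ j]ffunE [delta 1 j]ffunE; case: (eqVneq j i0) => [->|hj].
  by rewrite cardSc mi0 subSnn.
by rewrite cardSc_j // mj.
Qed.

Lemma p2Sc c : p2 (Sc c) i0 = [:: val c].
Proof.
rewrite /p2 p1Sc mi0.
rewrite (@eq_in_filter _ _ (pred1 (val c))); last first.
  by move=> b hb; rewrite mem_filter hb andbT negbK.
by rewrite filter_pred1_uniq ?iota_uniq // mem_iota add0n ltn_ord.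
Qed.

Lemma Sc_inj : injective Sc.
Proof.
move=> c c' e; apply/val_inj/eqP; apply: contraT => hne.
have hc : (val c < M.+1)%N by apply: leq_trans (ltn_ord c) _; apply: ltnW; rewrite ltnS tM.
have := congr1 (fun F : {ffun 'I_N -> {set 'I_M.+1}} => Ordinal hc \in F i0) e; rewrite /= !ffunE eqxx !inE /=.
by rewrite eqxx ltn_ord /= (negbTE hne).
Qed.

Lemma S_is_Sc (S : {ffun 'I_N -> {set 'I_M.+1}}) : [forall j, S j \subset [set a | (val a < m j)%N]] ->
  kS S = delta t -> exists c, S = Sc c.
Proof.
move=> hS hk.
have hkj j : #|S j| = (t * (j == i0))%N by have := congr1 (fun f : grading N => f j) hk; rewrite !ffunE.
have hsub : {subset p1 S i0 <= iota 0 t.+1}.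
  by move=> b hb; rewrite mem_iota add0n -mi0; apply: (p1_lt hS).
have [c hc hcn] : exists2 c, (c < t.+1)%N & c \notin p1 S i0.
  case: (boolP (all (mem (p1 S i0)) (iota 0 t.+1))) => hall.
    have := uniq_leq_size (iota_uniq 0 t.+1) (fun b hb => (allP hall) b hb).
    by rewrite size_iota p1_size ffunE hkj eqxx muln1 ltnn.
  have [b hb hbn] := allPn hall; exists b => //; by move: hb; rewrite mem_iota add0n.
exists (Ordinal hc); apply/ffunP => j.
case: (eqVneq j i0) => [->|hj]; last first.
  by rewrite ffunE (negbTE hj); apply: cards0_eq; rewrite hkj (negbTE hj) muln0.
apply/eqP; rewrite eqEcard cardSc hkj eqxx muln1 leqnn andbT.
apply/subsetP => a ha; rewrite ffunE eqxx inE /=.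
have := (forallP hS i0) => /subsetP /(_ a ha); rewrite inE mi0 => -> /=.
apply: contraNneq hcn => <-; apply/mapP; exists a => //; by rewrite mem_enum.
Qed.

Lemma kS_le (S : {ffun 'I_N -> {set 'I_M.+1}}) : [forall j, S j \subset [set a | (val a < m j)%N]] -> forall j, (kS S j <= m j)%N.
Proof.
move=> hS j; rewrite -p1_size -(size_iota 0 (m j)); apply: uniq_leq_size; first exact: p1_uniq.
by move=> b hb; rewrite mem_iota add0n; apply: (p1_lt hS).
Qed.

End GenData.

Section GenShuf.
Variables (C : numFieldType) (N : nat) (i0 : 'I_N) (r0 : nat).

Definition Tt t : elt C N := fun k x =>
  if k == delta i0 t then t`!%:R * \prod_(a < t) x i0 a ^+ r0 else 0.

Lemma genW_delta : [ffun j => nat_of_bool (j == i0)] = delta i0 1.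
Proof. by apply/ffunP => j; rewrite !ffunE mul1n. Qed.

Lemma zeta_ii (w : C) : zeta i0 i0 w = 1 + w^-1.
Proof.
rewrite /zeta /cartan eqxx; congr (_ + _).
have h2 : (2%:R : C) != 0 by apply: two_neq0.
by rewrite invfM mulrA -[(2%:~R : C)]/(2%:R) mulfV // mul1r.
Qed.

Lemma shufT t m x : generic m x -> shufW (Tt t) (genW i0 r0) m x = Tt t.+1 m x.
Proof.
move=> hx.
pose Gx (S : {ffun 'I_N -> {set 'I_((\sum_(i < N) m i)%N).+1}}) :=
  (if kS S == delta i0 t then t`!%:R * \prod_(a < t) x i0 (phi1 S i0 a) ^+ r0 else 0) *
  (if lS S == delta i0 1 then x i0 (phi2 S i0 0) ^+ r0 else 0) *
  \prod_(i < N) \prod_(j < N) \prod_(r < kS S i) \prod_(s < lS S j)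
     zeta i j (x i (phi1 S i r) - x j (phi2 S j s)).
have -> : shufW (Tt t) (genW i0 r0) m x =
    \sum_(S : {ffun 'I_N -> {set 'I_((\sum_(i < N) m i)%N).+1}} | [forall i, S i \subset [set j | (val j < m i)%N]]) Gx S.
  by apply: eq_bigr => S hS; rewrite /Tt /genW genW_delta.
case: (eqVneq m (delta i0 t.+1)) => hm; last first.
  rewrite /Tt (negbTE hm) big1 // => S hS; rewrite /Gx.
  case: eqP => hk; last by rewrite !mul0r.
  case: eqP => hl; last by rewrite mulr0 mul0r.
  exfalso; move/negP: hm; apply; apply/eqP/ffunP => j.
  have := kS_le hS j; have := congr1 (fun f : grading N => f j) hk.
  have := congr1 (fun f : grading N => f j) hl; rewrite !ffunE => hl' hk' hle.
  by rewrite -(subnK hle) hl' hk' mul1n mulSn.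
have mi0 : m i0 = t.+1 by rewrite hm ffunE eqxx muln1.
have mj : forall j, j != i0 -> m j = 0%N by move=> j hj; rewrite hm ffunE (negbTE hj) muln0.
have cond_Sc c : [forall i, Sc i0 m c i \subset [set j | (val j < m i)%N]] := Sc_cond mi0 c.
rewrite (bigID (fun S => S \in [set Sc i0 m c | c in 'I_t.+1])) /=.
rewrite [X in _ + X]big1 ?addr0; last first.
  move=> S /andP [hS hn]; rewrite /Gx; case: eqP => hk; last by rewrite !mul0r.
  have [c ec] := S_is_Sc mi0 hS hk.
  by move: hn; rewrite ec; move/negP; case; apply/imsetP; exists c.
rewrite (eq_bigl (fun S => S \in [set Sc i0 m c | c in 'I_t.+1])); last first.
  move=> S; apply/andP/idP => [[] //|hS]; split => //.
  by case/imsetP: hS => c _ ->.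
rewrite big_imset /=; last by move=> c c' _ _; apply: Sc_inj.
have hprod : forall (n : nat) (F : 'I_n -> C) (G : nat -> C) (L : seq nat),
    size L = n -> (forall r : 'I_n, F r = G (nth 0%N L r)) ->
    \prod_(r < n) F r = \prod_(b <- L) G b.
  by move=> n F G L' hs hF; rewrite (big_nth 0%N) hs big_mkord; apply: eq_bigr => r _.
have hone : forall n (F : 'I_n -> C) (h : (0 < n)%N), n = 1%N ->
    \prod_(s < n) F s = F (Ordinal h).
  by move=> n F h hn; subst n; rewrite big_ord1; congr F; apply: val_inj.
have hiota : forall (G : nat -> C) (c : 'I_t.+1),
    \prod_(b <- [seq b <- iota 0 t.+1 | b != val c]) G b = \prod_(b < t.+1 | b != c) G b.
  move=> G c; rewrite big_filter -[iota 0 t.+1]/(index_iota 0 t.+1) big_mkord.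
  by apply: eq_bigl => b.
have GSc c : Gx (Sc i0 m c) = t`!%:R * \prod_(a < t.+1) x i0 a ^+ r0 *
    \prod_(b < t.+1 | b != c) (1 + (x i0 b - x i0 c)^-1).
  rewrite /Gx.
  have -> : (kS (Sc i0 m c) == delta i0 t) = true by rewrite (kSc mi0) eqxx.
  have -> : (lS (Sc i0 m c) == delta i0 1) = true by rewrite (lSc mi0 mj) eqxx.
  have hk i : kS (Sc i0 m c) i = (t * (i == i0))%N by rewrite (kSc mi0) ffunE.
  have hl i : lS (Sc i0 m c) i = (i == i0) :> nat by rewrite (lSc mi0 mj) ffunE mul1n.
  set L := [seq b <- iota 0 t.+1 | b != val c].
  have e1 : \prod_(a < t) x i0 (phi1 (Sc i0 m c) i0 a) ^+ r0 = \prod_(b <- L) x i0 b ^+ r0.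
    by apply: hprod; [rewrite size_Lc | move=> r; rewrite /phi1 (p1Sc mi0)].
  have e2 : phi2 (Sc i0 m c) i0 0 = val c by rewrite /phi2 (p2Sc mi0).
  have e3 : \prod_(i < N) \prod_(j < N) \prod_(r < kS (Sc i0 m c) i) \prod_(s < lS (Sc i0 m c) j)
      zeta i j (x i (phi1 (Sc i0 m c) i r) - x j (phi2 (Sc i0 m c) j s)) =
      \prod_(b <- L) (1 + (x i0 b - x i0 c)^-1).
    rewrite (bigD1 i0) //= [X in _ * X]big1 ?mulr1; last first.
      move=> i hi; apply: big1 => j _; apply: big1 => r _; exfalso.
      have : (val r < t * (i == i0))%N by rewrite -hk ltn_ord.
      by rewrite (negbTE hi) muln0.
    rewrite (bigD1 i0) //= [X in _ * X]big1 ?mulr1; last first.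
      move=> j hj; apply: big1 => r _; apply: big1 => s _; exfalso.
      have : (val s < (j == i0))%N by rewrite -hl ltn_ord.
      by rewrite (negbTE hj).
    apply: hprod; first by rewrite hk eqxx muln1 size_Lc.
    move=> r; have h0 : (0 < lS (Sc i0 m c) i0)%N by rewrite hl eqxx.
    rewrite (hone _ _ h0); last by rewrite hl eqxx.
    by rewrite zeta_ii /phi1 (p1Sc mi0) /phi2 (p2Sc mi0).
  rewrite e1 e2 e3 -(hiota (fun b => 1 + (x i0 b - x i0 c)^-1)).
  have -> : \prod_(a < t.+1) x i0 a ^+ r0 = x i0 c ^+ r0 * \prod_(b <- L) x i0 b ^+ r0.
    by rewrite (hiota (fun b => x i0 b ^+ r0)) (bigD1 c).
  ring.
under eq_bigr => c _ do rewrite GSc.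
rewrite -mulr_sumr lagrange_sum; last first.
  move=> a b e; apply: val_inj.
  have ha : (val a < m i0)%N by rewrite mi0 ltn_ord.
  have hb : (val b < m i0)%N by rewrite mi0 ltn_ord.
  by have [] := hx i0 i0 a b ha hb e.
rewrite /Tt hm eqxx factS natrM; ring.
Qed.

End GenShuf.

Section Final.
Variables (C : numFieldType) (N : nat).
Implicit Types (X Y : elt C N).

Lemma eqW_trans X Y Z : eqW X Y -> eqW Y Z -> eqW X Z.
Proof. by move=> h1 h2 k x hx; rewrite h1 // h2. Qed.

Lemma shuf_eqW X X' Y Y' : eqW X X' -> eqW Y Y' -> eqW (shufW X Y) (shufW X' Y').
Proof.
move=> eX eY m x hx; apply: eq_bigr => S hS.
by rewrite /= (eX _ _ (gen1 hS hx)) (eY _ _ (gen2 hS hx)).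
Qed.

Lemma scale_eqW c X Y : eqW X Y -> eqW (scaleW c X) (scaleW c Y).
Proof. by move=> e k x hx; rewrite /scaleW e. Qed.

Lemma inW_eqW X Y : eqW X Y -> inW X -> inW Y.
Proof.
move=> e [[s hs] hW]; split.
  by exists s => k hk x hx; rewrite -e // hs.
move=> k; have [[f [hf ef]] hwh] := hW k; split.
  by exists f; split => // x hx; rewrite -e // ef.
move=> i j r1 r2 s' hij h1 h2 h3 hne x hx e1 e2; rewrite -e //.
exact: (hwh i j r1 r2 s' hij h1 h2 h3 hne x hx e1 e2).
Qed.

Lemma dyW_add X Y : dyW X -> dyW Y -> dyW (addW X Y).
Proof.
move=> hX hY k; have [f [hf ef]] := hX k; have [g [hg eg]] := hY k.
exists (f + g); split; first exact: dyadicPD.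
by move=> x hx; rewrite /addW ef // eg // mevalD mulrDl.
Qed.

Lemma dyW_scale c X : dyadic c -> dyW X -> dyW (scaleW c X).
Proof.
move=> hc hX k; have [f [hf ef]] := hX k.
exists (c *: f); split; first exact: dyadicPZ.
by move=> x hx; rewrite /scaleW ef // mevalZ mulrA.
Qed.

Lemma dyW_one : dyW (@oneW C N).
Proof.
apply: dyW_of_DP => k; exists (fun x => if k == [ffun => 0%N] then Dk k x else 0); split.
  by case: eqP => _; [apply: DP_Dk | apply: DP_const; apply: dyadic0].
by move=> x _; rewrite /oneW; case: ifP => _; rewrite ?mul1r ?mul0r.
Qed.

Lemma dyW_Tt (i0 : 'I_N) r0 t : dyW (scaleW (t`!%:R)^-1 (Tt (C:=C) i0 r0 t)).
Proof.
apply: dyW_of_DP => k.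
exists (fun x : pt C N => if k == delta i0 t then (\prod_(a < t) x i0 a ^+ r0) * Dk k x else 0); split.
  case: eqP => [hk|_]; last by apply: DP_const; apply: dyadic0.
  apply: DP_mul; last exact: DP_Dk.
  apply: DP_prod => a _; apply: DP_exp; apply: DP_atom.
  by rewrite hk ffunE eqxx muln1.
move=> x _; rewrite /scaleW /Tt; case: ifP => _; last by rewrite !mulr0 mul0r.
have h : (t`!%:R : C) != 0 by rewrite pnatr_eq0 -lt0n fact_gt0.
by rewrite mulrA mulVf // mul1r.
Qed.

Lemma Tt0 (i0 : 'I_N) r0 : eqW (@oneW C N) (Tt (C:=C) i0 r0 0).
Proof.
move=> k x _; rewrite /oneW /Tt.
have -> : delta i0 0 = [ffun => 0%N] by apply/ffunP => j; rewrite !ffunE mul0n.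
by case: ifP => _; rewrite // big_ord0 mulr1.
Qed.

End Final.

Unset Implicit Arguments.
Theorem lemma2p12 (R : realType) (n : nat) (hn : (2 <= n)%N)
  (A : algType R[i]) (e : 'I_n.-1 -> nat -> A) (Psi : A -> elt R[i] n.-1) :
  Yrel e -> Psi_iso e Psi ->
  forall a : A, Ysub e a -> inbW (Psi a).
Proof.
move=> _ hPsi a ha.
have [hadd [hscale [hmul [hone [hgen [hin [hinj hsurj]]]]]]] := hPsi.
split; first exact: hin.
suff : dyW (Psi a) by move=> h k; have [f [hf ef]] := h k; exists f.
elim: ha => {a}.
- move=> i r t.
  have hp : forall t, eqW (Psi (e i r ^+ t)) (Tt i r t).
    elim=> [|t' ih].
      by rewrite expr0; apply: eqW_trans hone (Tt0 _ _).
    rewrite exprSr; apply: eqW_trans (hmul _ _) _.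
    apply: eqW_trans (shuf_eqW ih (hgen i r)) _.
    by move=> m x hx; rewrite shufT.
  apply: dyW_eqW (eqW_trans (hscale _ _) (scale_eqW _ (hp t))) _.
  exact: dyW_Tt.
- by apply: dyW_eqW hone _; apply: dyW_one.
- by move=> a b _ ha _ hb; apply: dyW_eqW (hadd a b) (dyW_add ha hb).
- move=> a b _ ha _ hb; apply: dyW_eqW (hmul a b) _.
  apply: dyW_of_Good; first exact: inW_eqW (hmul a b) (hin _).
  exact: Good_shuf.
- by move=> c a hc _ ha; apply: dyW_eqW (hscale c a) (dyW_scale hc ha).
Qed.
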